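(* Let $\overrightarrow{W}$ be a Morse sequence on a simplicial complex $K$. (1) If $z\in Z_p(K)$, then $\widetilde{\curlywedge}_p(\curlywedge_p(z))$ is homologous to $z$, i.e. $\widetilde{\curlywedge}_p(\curlywedge_p(z))+z\in B_p(K)$. (2) If $z\in Z^p(K)$, then $\widetilde{\curlyvee}_p(\curlyvee_p(z))$ is cohomologous to $z$, i.e. $\widetilde{\curlyvee}_p(\curlyvee_p(z))+z\in B^p(K)$.
   Context: A simplicial complex $K$ is a finite collection of non-empty finite sets closed under taking non-empty subsets; $\dim\sigma=|\sigma|-1$, $K^{(p)}$ the set of $p$-simplices. A pair $(\sigma,\tau)$ with $\sigma\subsetneq\tau$ is a free pair for $K$ if $\tau$ is the only simplex other than $\sigma$ containing $\sigma$; $K$ is then an elementary expansion of $K\setminus\{\sigma,\tau\}$. If $\nu$ is a facet (maximal simplex) of $K$, $K$ is an elementary filling of $K\setminus\{\nu\}$. A Morse sequence on $K$ is a sequence $\langle\emptyset=K_0,\dots,K_k=K\rangle$ with each $K_i$ an elementary expansion or filling of $K_{i-1}$; simplices added by fillings are critical; for an expansion $K_i=K_{i-1}\cup\{\sigma,\tau\}$, $\sigma\subset\tau$, $\sigma$ is lower regular and $\tau$ upper regular. $\widehat W$ is the set of critical simplices. $K[p]$ is the $\mathbb{Z}_2$-vector space of subsets of $K^{(p)}$ (sum = symmetric difference, $0=\emptyset$), $\widehat W[p]=\{c\in K[p]:c\subseteq\widehat W\}$. For $\sigma\in K^{(p)}$, $\partial(\sigma)=\{\tau\in K^{(p-1)}:\tau\subset\sigma\}$,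 $\delta(\sigma)=\{\tau\in K^{(p+1)}:\sigma\subset\tau\}$, extended linearly to $\partial_p,\delta_p$; $Z_p(K)=\ker\partial_p$, $B_p(K)=\operatorname{im}\partial_{p+1}$, $Z^p(K)=\ker\delta_p$, $B^p(K)=\operatorname{im}\delta_{p-1}$. The reference map $\curlywedge$ is the unique map assigning to each $p$-simplex an element of $\widehat W[p]$, with linear extension $\curlywedge_p:K[p]\to\widehat W[p]$, such that $\curlywedge(\nu)=\{\nu\}$ for critical $\nu$ and $\curlywedge(\tau)=0=\curlywedge(\partial(\tau))$ for upper regular $\tau$; the coreference map $\curlyvee$ (linear extension $\curlyvee_p$) is the unique such map with $\curlyvee(\nu)=\{\nu\}$ for critical $\nu$ and $\curlyvee(\sigma)=0=\curlyvee(\delta(\sigma))$ for lower regular $\sigma$. The extension map $\widetilde\curlywedge_p:\widehat W[p]\to K[p]$ and coextension map $\widetilde\curlyvee_p:\widehat W[p]\to K[p]$ are the linear maps defined on critical $p$-simplices $\kappa$ by $\widetilde\curlywedge(\kappa)=\{\nu\in K:\kappa\in\curlyvee(\nu)\}$ and $\widetilde\curlyvee(\kappa)=\{\nu\in K:\kappa\in\curlywedge(\nu)\}$. *)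

(* Defs.v *)
(* Simplicial complexes over a finite vertex type V;
   simplices are finite sets {set V}; chains over Z_2 are sets of simplices. *)
From mathcomp Require Import all_boot.
Set Implicit Arguments. Unset Strict Implicit. Unset Printing Implicit Defensive.

Section Defs.
Variable V : finType.
Notation simplex := {set V}.
Notation chain := {set {set V}}.

Definition is_complex (K : chain) : bool :=
  (set0 \notin K) &&
  [forall s in K, forall t : simplex, ((t != set0) && (t \subset s)) ==> (t \in K)].

(* simplices of K with n vertices; K^(p) is Ksz K p.+1 (dim = card - 1) *)
Definition Ksz (K : chain) (n : nat) : chain := [set s in K | #|s| == n].
Definition Kp (K : chain) (p : nat) : chain := Ksz K p.+1.

(* Z_2 sum of chains: symmetric difference *)
Definition csum (a b : chain) : chain := (a :\: b) :|: (b :\: a).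

(* linear extension over Z_2 of a map on simplices *)
Definition lin (f : simplex -> chain) (c : chain) : chain :=
  [set x | odd #|[set s in c | x \in f s]|].

Definition bd (K : chain) (s : simplex) : chain :=
  [set t in K | (t \proper s) && (#|t|.+1 == #|s|)].
Definition cobd (K : chain) (s : simplex) : chain :=
  [set t in K | (s \proper t) && (#|t| == #|s|.+1)].

Definition is_cycle (K : chain) (p : nat) (z : chain) : Prop :=
  z \subset Kp K p /\ lin (bd K) z = set0.
Definition is_boundary (K : chain) (p : nat) (x : chain) : Prop :=
  exists2 c : chain, c \subset Kp K p.+1 & lin (bd K) c = x.
Definition is_cocycle (K : chain) (p : nat) (z : chain) : Prop :=
  z \subset Kp K p /\ lin (cobd K) z = set0.
(* B^p = im delta_{p-1}, with K^(p-1) = simplices with p vertices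
   (empty when p = 0, since K has no empty simplex) *)
Definition is_coboundary (K : chain) (p : nat) (x : chain) : Prop :=
  exists2 c : chain, c \subset Ksz K p & lin (cobd K) c = x.

(* Steps of a Morse sequence: inl nu = elementary filling adding facet nu,
   inr (sigma, tau) = elementary expansion adding the free pair (sigma, tau). *)
Definition step := (simplex + (simplex * simplex))%type.

Fixpoint valid_from (K0 : chain) (W : seq step) : bool :=
  match W with
  | [::] => true
  | inl nu :: W' =>
      let K1 := nu |: K0 in
      [&& nu \notin K0, is_complex K1,
          [forall t in K1, (nu \subset t) ==> (t == nu)]
        & valid_from K1 W']
  | inr (sg, tu) :: W' =>
      let K1 := sg |: (tu |: K0) in
      [&& sg \proper tu, sg \notin K0, tu \notin K0, is_complex K1,
          [forall t in K1, (sg \subset t) ==> ((t == sg) || (t == tu))]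
            (* (sg, tu) is a free pair for K1 *)
        & valid_from K1 W']
  end.

Definition step_added (x : step) : chain :=
  match x with inl nu => [set nu] | inr (sg, tu) => [set sg; tu] end.

Definition morse_seq (K : chain) (W : seq step) : Prop :=
  valid_from set0 W /\ \bigcup_(x <- W) step_added x = K.

Definition crit (W : seq step) : chain := [set nu | inl nu \in W].
Definition lowreg (W : seq step) : chain :=
  [set sg | [exists tu : simplex, inr (sg, tu) \in W]].
Definition upreg (W : seq step) : chain :=
  [set tu | [exists sg : simplex, inr (sg, tu) \in W]].

Definition is_ref (K : chain) (W : seq step) (r : simplex -> chain) : Prop :=
  [/\ (forall s, s \in K -> r s \subset [set k in crit W | #|k| == #|s|]),
      (forall nu, nu \in crit W -> r nu = [set nu]) &
      (forall tu, tu \in upreg W -> r tu = set0 /\ lin r (bd K tu) = set0)].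

Definition is_coref (K : chain) (W : seq step) (r : simplex -> chain) : Prop :=
  [/\ (forall s, s \in K -> r s \subset [set k in crit W | #|k| == #|s|]),
      (forall nu, nu \in crit W -> r nu = [set nu]) &
      (forall sg, sg \in lowreg W -> r sg = set0 /\ lin r (cobd K sg) = set0)].

Definition ext (K : chain) (coref : simplex -> chain) (c : chain) : chain :=
  lin (fun k => [set nu in K | k \in coref nu]) c.
Definition coext (K : chain) (ref : simplex -> chain) (c : chain) : chain :=
  lin (fun k => [set nu in K | k \in ref nu]) c.

End Defs.

(* Main.v *)
Require Import Defs.
From mathcomp Require Import all_boot zify.
Set Implicit Arguments. Unset Strict Implicit. Unset Printing Implicit Defensive.


Section Alg.
Variable V : finType.
Local Notation T := {set V}.
Implicit Types (a b c d : {set T}) (f g : T -> {set T}).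

Lemma odd_card_xor (A : {set T}) (P : pred T) :
  odd #|[set s in A | P s]| = \big[addb/false]_(s in A) P s.
Proof.
rewrite -sum1_card.
rewrite (eq_bigl (fun s => (s \in A) && P s)); last by move=> s; rewrite inE.
rewrite big_mkcond [in RHS]big_mkcond.
apply: (big_rec2 (fun y1 y2 => odd y1 = y2)) => // i y1 y2 _ <-.
by rewrite oddD; case: (i \in A); case: (P i).
Qed.

Lemma mem_lin f c x : (x \in lin f c) = \big[addb/false]_(s in c) (x \in f s).
Proof. by rewrite /lin inE odd_card_xor. Qed.

Lemma in_csum a b x : (x \in csum a b) = (x \in a) (+) (x \in b).
Proof. by rewrite /csum !inE; case: (x \in a); case: (x \in b). Qed.

Lemma big_xor_mkcond (A : {set T}) (F : T -> bool) :
  \big[addb/false]_(s in A) F s = \big[addb/false]_s ((s \in A) && F s).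
Proof. by rewrite big_mkcond; apply: eq_bigr => s _; case: (s \in A). Qed.

Lemma lin_csum f a b : lin f (csum a b) = csum (lin f a) (lin f b).
Proof.
apply/setP => x; rewrite in_csum !mem_lin !big_xor_mkcond -big_split /=.
apply: eq_bigr => s _. rewrite in_csum. by case: (s \in a); case: (s \in b); case: (x \in f s).
Qed.

Lemma lin0 f : lin f set0 = set0.
Proof. by apply/setP => x; rewrite mem_lin big_pred0 ?inE // => s; rewrite inE. Qed.

Lemma lin1 f s : lin f [set s] = f s.
Proof.
by apply/setP => x; rewrite mem_lin big_set1.
Qed.

Lemma lin_eq f g c : {in c, f =1 g} -> lin f c = lin g c.
Proof. move=> H; apply/setP => x; rewrite !mem_lin; apply: eq_bigr => s /H -> //. Qed.

Lemma lin_eq0 f c : {in c, forall s, f s = set0} -> lin f c = set0.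
Proof.
move=> H; apply/setP => x; rewrite mem_lin inE big1 // => s /H ->; by rewrite inE.
Qed.

Lemma lin_lin f g c : lin g (lin f c) = lin (fun s => lin g (f s)) c.
Proof.
apply/setP => x; rewrite !mem_lin big_xor_mkcond.
transitivity (\big[addb/false]_m \big[addb/false]_(s in c) ((m \in f s) && (x \in g m))).
  apply: eq_bigr => m _; rewrite mem_lin big_distrl /=; done.
rewrite exchange_big /=; apply: eq_bigr => s _; rewrite mem_lin big_xor_mkcond.
by apply: eq_bigr.
Qed.

Lemma csum0r a : csum a set0 = a.
Proof. by apply/setP => x; rewrite in_csum inE addbF. Qed.
Lemma csum0l a : csum set0 a = a.
Proof. by apply/setP => x; rewrite in_csum inE. Qed.
Lemma csumC a b : csum a b = csum b a.
Proof. by apply/setP => x; rewrite !in_csum addbC. Qed.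
Lemma csumA a b c : csum a (csum b c) = csum (csum a b) c.
Proof. by apply/setP => x; rewrite !in_csum addbA. Qed.
Lemma csumACA a b c d : csum (csum a b) (csum c d) = csum (csum a c) (csum b d).
Proof. by apply/setP => x; rewrite !in_csum addbACA. Qed.
Lemma csumKK a : csum a a = set0.
Proof. by apply/setP => x; rewrite !in_csum addbb inE. Qed.

End Alg.


Section DD.
Variable V : finType.
Local Notation T := {set V}.

Lemma count2 (a b : T) : a \subset b -> #|b| = #|a| + 2 ->
  #|[set m : T | [&& a \subset m, m \subset b & #|m| == #|a| + 1]]| = 2.
Proof.
move=> Hab Hc.
have -> : [set m : T | [&& a \subset m, m \subset b & #|m| == #|a| + 1]] =
          [set y |: a | y in b :\: a].
  apply/setP => m; rewrite inE; apply/idP/imsetP.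
  - move=> /and3P [Ham Hmb /eqP Hm].
    have : #|m :\: a| == 1.
      by rewrite cardsD (setIidPr Ham) Hm; apply/eqP; lia.
    move=> /cards1P [y Hy]; exists y.
      have : y \in m :\: a by rewrite Hy inE.
      by rewrite !inE => /andP [-> /(subsetP Hmb) ->].
    apply/setP => v; rewrite !inE.
    case: (boolP (v \in a)) => [Hv|Hv]; first by rewrite orbT (subsetP Ham).
    rewrite orbF; have := congr1 (fun S : {set V} => v \in S) Hy; rewrite /= !inE Hv /=.
    by move=> <-.
  - move=> [y]; rewrite inE => /andP [Hya Hyb] ->.
    rewrite subsetU1 /= cardsU1 Hya; apply/andP; split.
      by apply/subsetP => v; rewrite !inE => /orP [/eqP ->|/(subsetP Hab)].
    by apply/eqP; rewrite add1n addn1.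
rewrite card_in_imset.
  by rewrite cardsD (setIidPr Hab) Hc; lia.
move=> y1 y2 /setDP [_ Hy] /setDP [_ Hy2] E.
have : y1 \in y2 |: a by rewrite -E setU11.
by rewrite !inE (negbTE Hy) orbF => /eqP.
Qed.

Variable K : {set T}.
Hypothesis Hcl : forall s t, s \in K -> t != set0 -> t \subset s -> t \in K.

Lemma card_ge1 (m : T) (x : V) : x \in m -> 0 < #|m|.
Proof. by move=> Hx; rewrite card_gt0; apply/set0Pn; exists x. Qed.

Lemma odd_cond (A M : {set T}) (c : bool) :
  (forall m, (m \in A) = c && (m \in M)) -> (c -> #|M| = 2) -> odd #|A| = false.
Proof.
move=> HA HM; case: c HA HM => HA HM.
  have -> : A = M by apply/setP => m; rewrite HA.
  by rewrite HM.
have -> : A = set0 by apply/setP => m; rewrite HA inE.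
by rewrite cards0.
Qed.

Lemma bdbd s : s \in K -> lin (bd K) (bd K s) = set0.
Proof.
move=> HsK; apply/setP => x; rewrite [in RHS]inE /lin inE.
apply: (@odd_cond _ [set m : T | [&& x \subset m, m \subset s & #|m| == #|x| + 1]]
  [&& x \in K, x \subset s & #|s| == #|x| + 2]); last first.
  by move=> /and3P [_ Hxs /eqP Hc]; apply: count2.
move=> m; rewrite !inE !properEcard.
apply/idP/idP.
  move=> /andP [/and3P [HmK /andP [Hms _] /eqP Hc1] /and3P [HxK /andP [Hxm _] /eqP Hc2]].
  rewrite HxK Hxm Hms (subset_trans Hxm Hms) /=; apply/andP; split; apply/eqP; lia.
move=> /andP [/and3P [HxK _ /eqP Hc1] /and3P [Hxm Hms /eqP Hc2]].
have HmK : m \in K.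
  apply: (Hcl HsK) => //; rewrite -card_gt0 Hc2; lia.
rewrite HmK HxK Hms Hxm /=; lia.
Qed.

Lemma cobdcobd s : s \in K -> lin (cobd K) (cobd K s) = set0.
Proof.
move=> HsK; apply/setP => x; rewrite [in RHS]inE /lin inE.
apply: (@odd_cond _ [set m : T | [&& s \subset m, m \subset x & #|m| == #|s| + 1]]
  [&& x \in K, s \subset x & #|x| == #|s| + 2]); last first.
  by move=> /and3P [_ Hxs /eqP Hc]; apply: count2.
move=> m; rewrite !inE !properEcard.
apply/idP/idP.
  move=> /andP [/and3P [HmK /andP [Hsm _] /eqP Hc1] /and3P [HxK /andP [Hmx _] /eqP Hc2]].
  rewrite HxK Hmx Hsm (subset_trans Hsm Hmx) /=; apply/andP; split; apply/eqP; lia.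
move=> /andP [/and3P [HxK _ /eqP Hc1] /and3P [Hsm Hmx /eqP Hc2]].
have HmK : m \in K.
  apply: (Hcl HxK) => //; rewrite -card_gt0 Hc2; lia.
rewrite HmK HxK Hmx Hsm /=; lia.
Qed.
End DD.


Section Gen.
Variable V : finType.
Local Notation T := {set V}.
Variables (K C P L : {set T}) (D r q Dt : T -> {set T}) (sz : T -> nat)
  (g h : nat -> nat) (rho : T -> nat) (pi mu : T -> T).

Hypothesis HK : forall s, s \in K -> [\/ s \in C, s \in L | s \in P].
Hypothesis HC : forall k, k \in C -> r k = [set k].
Hypothesis HL : forall l, l \in L -> r l = set0 /\ lin r (D l) = set0.
Hypothesis HDK : forall t, D t \subset K.
Hypothesis HDsz : forall t x, x \in D t -> sz x = g (sz t).
Hypothesis Hpi : forall s, s \in P ->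
  [/\ pi s \in L, s \in D (pi s), sz (pi s) = h (sz s) &
      forall x, x \in D (pi s) -> x != s -> rho x < rho s].

Definition good n c := exists u w : {set T}, [/\ u \subset L, w \subset L,
  {in w, forall s, sz s = h n} & csum c (lin r c) = csum u (lin D w)].

Lemma good0 n : good n set0.
Proof.
exists set0, set0; split; rewrite ?sub0set //; last by rewrite !lin0 !csum0r.
by move=> s; rewrite inE.
Qed.

Lemma good_csum n a b : good n a -> good n b -> good n (csum a b).
Proof.
move=> [u1 [w1 [Hu1 Hw1 Hs1 E1]]] [u2 [w2 [Hu2 Hw2 Hs2 E2]]].
exists (csum u1 u2), (csum w1 w2); split.
- apply/subsetP => x; rewrite in_csum.
  by case: (boolP (x \in u1)) => [/(subsetP Hu1)//|_] /= /(subsetP Hu2).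
- apply/subsetP => x; rewrite in_csum.
  by case: (boolP (x \in w1)) => [/(subsetP Hw1)//|_] /= /(subsetP Hw2).
- move=> x; rewrite in_csum.
  by case: (boolP (x \in w1)) => [/Hs1//|_] /= /Hs2.
by rewrite !lin_csum csumACA E1 E2 csumACA.
Qed.

Lemma good_chain n (c : {set T}) : {in c, forall s, good n [set s]} -> good n c.
Proof.
move: {2}#|c| (erefl #|c|) => k; elim: k c => [|k IH] c Hk Hc.
  move: Hk => /eqP; rewrite cards_eq0 => /eqP ->; apply: good0.
have [s Hs] : exists s, s \in c.
  by apply/set0Pn; rewrite -card_gt0 Hk.
have -> : c = csum [set s] (c :\ s).
  apply/setP => x; rewrite in_csum !inE.
  by case: (eqVneq x s) => [->|]; rewrite ?Hs.
apply: good_csum; first exact: Hc.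
apply: IH; first by rewrite (cardsD1 s c) Hs in Hk; case: Hk.
by move=> x; rewrite inE => /andP [_ /Hc].
Qed.

Lemma good_single n N s : rho s < N -> s \in K -> sz s = n -> good n [set s].
Proof.
elim: N s => [//|N IH] s HsN HsK Hsz.
case: (HK HsK) => [Hs|Hs|Hs].
- exists set0, set0; split; rewrite ?sub0set //; first by move=> x; rewrite inE.
  by rewrite lin1 HC // csumKK lin0 csum0r.
- exists [set s], set0; split; rewrite ?sub0set ?sub1set //;
    first by move=> x; rewrite inE.
  by rewrite lin1 (proj1 (HL Hs)) lin0 !csum0r.
have [HpL HsD Hpsz Hrho] := Hpi Hs.
set e := csum (D (pi s)) [set s].
have He : good n e.
  apply: good_chain => x; rewrite in_csum inE.
  case: (eqVneq x s) => [-> | Hxs]; first by rewrite HsD.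
  rewrite addbF => Hx.
  apply: IH.
  - by have := Hrho x Hx Hxs; rewrite ltnS in HsN; move/leq_trans; apply.
  - exact: (subsetP (HDK (pi s))).
  - by rewrite (HDsz Hx) -(HDsz HsD).
have Hd : good n (D (pi s)).
  exists set0, [set pi s]; split; rewrite ?sub0set ?sub1set //.
  - by move=> x; rewrite inE => /eqP ->; rewrite Hpsz Hsz.
  by rewrite (proj2 (HL HpL)) csum0r lin1 csum0l.
have -> : [set s] = csum (D (pi s)) e by rewrite /e csumA csumKK csum0l.
exact: good_csum.
Qed.

Lemma lemmaA n (c : {set T}) : c \subset K -> {in c, forall s, sz s = n} -> good n c.
Proof.
move=> HcK Hc; apply: good_chain => s Hs.
apply: (@good_single n (rho s).+1) => //; [exact: (subsetP HcK) | exact: Hc].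
Qed.

Hypothesis Hmu : forall l, l \in L ->
  [/\ mu l \in P, mu l \in D l &
      forall l', l' \in L -> l' != l -> mu l \in D l' -> rho l < rho l'].

Lemma lemmaB (u : {set T}) : u \subset L -> [disjoint lin D u & P] -> u = set0.
Proof.
move=> HuL Hdis; apply/eqP; apply/negPn/negP => /set0Pn [l0 Hl0].
set l := [arg max_(l > l0 in u) rho l].
have [Hl Hmax] : l \in u /\ forall l', l' \in u -> rho l' <= rho l.
  by rewrite /l; case: arg_maxnP.
have HlL := subsetP HuL l Hl.
have [HmP HmD Hmo] := Hmu HlL.
have : mu l \in lin D u.
  rewrite mem_lin (bigD1 l) //= HmD big1 //.
  move=> l' /andP [Hl' Hne]; apply/negP => Hm.
  have := Hmo l' (subsetP HuL l' Hl') Hne Hm.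
  by rewrite ltnNge Hmax.
by move=> Hin; move: Hdis; rewrite disjoint_subset => /subsetP/(_ _ Hin); rewrite inE HmP.
Qed.

Hypothesis Hr : forall s, s \in K -> r s \subset C.
Hypothesis HCK : C \subset K.
Hypothesis HLK : L \subset K.
Hypothesis HqC : forall k, k \in C -> q k = [set k].
Hypothesis HqP : forall s, s \in P -> q s = set0 /\ lin q (Dt s) = set0.
Hypothesis HDt : forall s, s \in P -> forall nu, (nu \in Dt s) = (nu \in K) && (s \in D nu).
Hypothesis HDD : forall s, s \in K -> lin D (D s) = set0.

Definition E (k : T) := [set nu in K | k \in q nu].

Lemma main_gen n (z : {set T}) : z \subset K -> {in z, forall s, sz s = n} -> lin D z = set0 ->
  exists w : {set T}, [/\ w \subset L, {in w, forall s, sz s = h n} &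
    csum (lin E (lin r z)) z = lin D w].
Proof.
move=> HzK Hzs Hcyc.
have [u [w [HuL HwL Hws Hdec]]] := lemmaA HzK Hzs.
set a := lin r z.
have HaC : a \subset C.
  apply/subsetP => x; rewrite mem_lin.
  elim/big_rec: _ => // s y Hs IHy.
  case: (boolP (x \in r s)) => [/(subsetP (Hr (subsetP HzK s Hs)))//|_]; exact: IHy.
set e := lin E a.
have HeC : forall x, x \in C -> (x \in e) = (x \in a).
  move=> x HxC; rewrite mem_lin.
  rewrite (eq_bigr (fun k => k == x)); last first.
    by move=> k _; rewrite inE (subsetP HCK x HxC) HqC // inE.
  rewrite big_xor_mkcond (bigD1 x) //= eqxx andbT big1 ?addbF //.
  by move=> k /negbTE ->; rewrite andbF.
have HeK : e \subset K.
  apply/subsetP => x; rewrite mem_lin.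
  elim/big_rec: _ => // k y _ IHy; rewrite inE.
  by move: IHy; case: (x \in K).
have HeP : forall x, x \in P -> x \notin e.
  move=> x HxP; rewrite mem_lin big1 // => k _; rewrite inE (proj1 (HqP HxP)) inE.
  by rewrite andbF.
have He'L : csum e a \subset L.
  apply/subsetP => x; rewrite in_csum.
  case: (boolP (x \in a)) => [Hxa|Hxa].
    by rewrite HeC ?Hxa // (subsetP HaC).
  rewrite addbF => Hxe.
  case: (HK (subsetP HeK x Hxe)) => [HxC|//|HxP].
    by move: Hxe; rewrite HeC // (negbTE Hxa).
  by move: Hxe; rewrite (negbTE (HeP x HxP)).
have HDe : [disjoint lin D e & P].
  rewrite disjoint_subset; apply/subsetP => s Hs; apply/negP => HsP.
  move: Hs; rewrite /e lin_lin mem_lin big1 // => k _.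
  transitivity (k \in lin q (Dt s)); last by rewrite (proj2 (HqP HsP)) inE.
  rewrite !mem_lin !big_xor_mkcond.
  by apply: eq_bigr => nu _; rewrite HDt // inE; case: (nu \in K); case: (k \in q nu); case: (s \in D nu).
set u2 := csum (csum e a) u.
have Hez : csum e z = csum u2 (lin D w).
  by rewrite /u2 -csumA -Hdec /a [csum z _]csumC csumA -(csumA e) csumKK csum0r.
have Hu2 : u2 = set0.
  apply: lemmaB.
    apply/subsetP => x; rewrite in_csum.
    by case: (boolP (x \in csum e a)) => [/(subsetP He'L)//|_] /= /(subsetP HuL).
  have HDDw : lin D (lin D w) = set0.
    rewrite lin_lin (@lin_eq0 _ _ w) // => s Hs; apply: HDD.
    exact: (subsetP HLK _ (subsetP HwL _ Hs)).
  have -> : lin D u2 = lin D e.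
    have : lin D (csum e z) = lin D (csum u2 (lin D w)) by rewrite Hez.
    by rewrite (lin_csum D e z) (lin_csum D u2 (lin D w)) Hcyc HDDw !csum0r => ->.
  exact: HDe.
exists w; split => //.
by rewrite Hez Hu2 csum0l.
Qed.

End Gen.


Section Morse.
Variable V : finType.
Local Notation T := {set V}.

Definition vstep (K0 : {set T}) (x : step V) : bool :=
  match x with
  | inl nu =>
      let K1 := nu |: K0 in
      [&& nu \notin K0, is_complex K1 &
          [forall t in K1, (nu \subset t) ==> (t == nu)]]
  | inr (sg, tu) =>
      let K1 := sg |: (tu |: K0) in
      [&& sg \proper tu, sg \notin K0, tu \notin K0, is_complex K1 &
          [forall t in K1, (sg \subset t) ==> ((t == sg) || (t == tu))]]
  end.

Lemma valid_cons K0 x W :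
  valid_from K0 (x :: W) = vstep K0 x && valid_from (step_added x :|: K0) W.
Proof.
case: x => [nu|[sg tu]] /=; first by rewrite -!andbA.
by rewrite -setUA -!andbA.
Qed.

Lemma added_K1 K0 x : vstep K0 x -> is_complex (step_added x :|: K0).
Proof.
case: x => [nu|[sg tu]] /=; first by case/and3P.
by case/and5P => _ _ _; rewrite setUA.
Qed.

Lemma mem_bigcup_seq (r : seq (step V)) s :
  (s \in \bigcup_(y <- r) step_added y) = has (fun y => s \in step_added y) r.
Proof. elim: r => [|y r IH]; by rewrite ?big_nil ?big_cons ?inE //= IH. Qed.

Definition x0 : step V := inl set0.

Lemma vf_nth K0 W i : valid_from K0 W -> i < size W ->
  vstep (K0 :|: \bigcup_(y <- take i W) step_added y) (nth x0 W i).
Proof.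
elim: W K0 i => [//|y W IH] K0 [|i].
  by rewrite valid_cons /= big_nil setU0 => /andP [].
rewrite valid_cons /= => /andP [_ Hv] Hi.
have := IH _ i Hv Hi.
by rewrite big_cons setUA [K0 :|: _]setUC.
Qed.

Variables (K : {set T}) (W : seq (step V)).
Hypothesis HW : morse_seq K W.

Definition idx (s : T) := find (fun y => s \in step_added y) W.
Definition Kb i := \bigcup_(y <- take i W) step_added y.

Lemma inK s : (s \in K) = has (fun y => s \in step_added y) W.
Proof. by case: HW => _ <-; rewrite mem_bigcup_seq. Qed.

Lemma idx_lt s : s \in K -> idx s < size W.
Proof. by rewrite inK -has_find. Qed.

Lemma idx_at s : s \in K -> s \in step_added (nth x0 W (idx s)).
Proof. by rewrite inK => H; apply: (nth_find x0 H). Qed.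

Lemma inKb i s : s \in K -> (s \in Kb i) = (idx s < i).
Proof. by rewrite inK => H; rewrite /Kb mem_bigcup_seq has_take. Qed.

Lemma Kb_sub i : Kb i \subset K.
Proof.
apply/subsetP => s; rewrite /Kb mem_bigcup_seq inK => /hasP [y Hy Hs].
by apply/hasP; exists y => //; apply: mem_take Hy.
Qed.

Lemma added_sub y : y \in W -> step_added y \subset K.
Proof. by move=> Hy; apply/subsetP => s Hs; rewrite inK; apply/hasP; exists y. Qed.

Lemma vstep_at i : i < size W -> vstep (set0 :|: Kb i) (nth x0 W i).
Proof. by move=> Hi; apply: vf_nth => //; case: HW. Qed.

Lemma K1_at i : i < size W -> is_complex (step_added (nth x0 W i) :|: Kb i).
Proof. by move=> Hi; have := added_K1 (vstep_at Hi); rewrite set0U. Qed.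

Lemma K1_sub i : i < size W -> step_added (nth x0 W i) :|: Kb i \subset K.
Proof. by move=> Hi; rewrite subUset Kb_sub added_sub ?mem_nth. Qed.

Lemma K_closed s t : s \in K -> t != set0 -> t \subset s -> t \in K.
Proof.
move=> Hs Ht Hts.
have Hi := idx_lt Hs.
have /andP [_ /forallP /(_ s)] := K1_at Hi.
rewrite inE idx_at // => /implyP /(_ isT) /forallP /(_ t).
by rewrite Ht Hts /= => /(subsetP (K1_sub Hi)).
Qed.

Lemma K_nonempty s : s \in K -> s != set0.
Proof.
move=> Hs; have Hi := idx_lt Hs.
have /andP [H0 _] := K1_at Hi.
by apply: contraNneq H0 => <-; rewrite inE idx_at.
Qed.


Section Pair.
Variables (sg tu : T).
Hypothesis Hp : inr (sg, tu) \in W.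
Let i := index (inr (sg, tu)) W.
Let Hi : i < size W. Proof. by rewrite index_mem. Qed.
Let Hn : nth x0 W i = inr (sg, tu). Proof. exact: nth_index. Qed.

Let Hv : vstep (set0 :|: Kb i) (inr (sg, tu)).
Proof. by rewrite -Hn; apply: vstep_at. Qed.

Lemma pair_proper : sg \proper tu.
Proof. by case/and5P: Hv. Qed.

Lemma pair_K : sg \in K /\ tu \in K.
Proof.
have := added_sub (y := inr (sg, tu)) Hp => /subsetP H.
by split; apply: H; rewrite !inE eqxx ?orbT.
Qed.

Let K1 := sg |: (tu |: (set0 :|: Kb i)).

Let Hfree : forall t, t \in K1 -> sg \subset t -> (t == sg) || (t == tu).
Proof.
case/and5P: Hv => _ _ _ _ /forallP H t Ht Hs.
by have := H t; rewrite Ht Hs.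
Qed.

Let Hcpx : is_complex K1.
Proof. by case/and5P: Hv. Qed.

Lemma pair_card : #|tu| = #|sg|.+1.
Proof.
have Hpr := pair_proper.
have [v Hvt Hvs] : exists2 v, v \in tu & v \notin sg.
  move: Hpr; rewrite properE => /andP [_ /subsetPn [v Hv1 Hv2]]; by exists v.
have Hne : v |: sg != set0 by apply/set0Pn; exists v; rewrite !inE eqxx.
have Hsub : v |: sg \subset tu by rewrite subUset sub1set Hvt (proper_sub Hpr).
have Ht : v |: sg \in K1.
  have HtuK1 : tu \in K1 by rewrite /K1 !inE eqxx orbT.
  case/andP: Hcpx => _ /forallP /(_ tu); rewrite HtuK1 /=.
  by move=> /forallP /(_ (v |: sg)); rewrite Hne Hsub.
have := Hfree Ht (subsetUr _ _).
case/orP => /eqP E.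
  by move: Hvs; rewrite -E !inE eqxx.
by rewrite -E cardsU1 Hvs.
Qed.

Lemma idx_pair : idx sg = i /\ idx tu = i.
Proof.
have [HsK HtK] := pair_K.
have Hin : forall s, s \in step_added (inr (sg, tu)) -> s \in K -> idx s = i.
  move=> s Hs HsK'; apply/eqP; rewrite eqn_leq; apply/andP; split.
    rewrite leqNgt; apply/negP => Hlt.
    by have := before_find x0 Hlt; rewrite Hn Hs.
  rewrite leqNgt -inKb //; apply/negP => Hb.
  case/and5P: Hv => _ H1 H2 _ _; move: Hs; rewrite !inE => /orP [] /eqP E.
    by move: H1; rewrite -E in_setU Hb orbT.
  by move: H2; rewrite -E in_setU Hb orbT.
by split; apply: Hin => //; rewrite !inE eqxx ?orbT.
Qed.

Lemma pair_below x : x \in K -> x \proper tu -> x != sg -> idx x < i.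
Proof.
move=> HxK Hxt Hxs.
have HxK1 : x \in K1.
  have HtuK1 : tu \in K1 by rewrite /K1 !inE eqxx orbT.
  case/andP: Hcpx => _ /forallP /(_ tu); rewrite HtuK1 /=.
  by move=> /forallP /(_ x); rewrite K_nonempty // (proper_sub Hxt).
move: HxK1; rewrite !inE (negbTE Hxs) /= => /orP [/eqP E|].
  by move: Hxt; rewrite E properxx.
by rewrite inKb.
Qed.

Lemma pair_above nu : nu \in K -> sg \proper nu -> nu != tu -> i < idx nu.
Proof.
move=> HnK Hsn Hnt; rewrite ltnNge; apply/negP => Hle.
have HnK1 : nu \in K1.
  move: Hle; rewrite leq_eqVlt => /orP [/eqP E|Hlt].
    have := idx_at HnK; rewrite E Hn !inE => /orP [->//|->]; by rewrite orbT.
  by rewrite !inE inKb // Hlt !orbT.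
have := Hfree HnK1 (proper_sub Hsn).
rewrite (negbTE Hnt) orbF => /eqP E.
by move: Hsn; rewrite E properxx.
Qed.

End Pair.

End Morse.


Section Final.
Variable V : finType.
Local Notation T := {set V}.
Variables (K : {set T}) (W : seq (step V)).
Hypothesis HW : morse_seq K W.

Definition pup (s : T) := odflt s [pick t | inr (s, t) \in W].
Definition plow (t : T) := odflt t [pick s | inr (s, t) \in W].

Lemma pupP s : s \in lowreg W -> inr (s, pup s) \in W.
Proof.
rewrite inE => /existsP [t Ht]; rewrite /pup; case: pickP => [y Hy|H] //.
by rewrite H in Ht.
Qed.

Lemma plowP t : t \in upreg W -> inr (plow t, t) \in W.
Proof.
rewrite inE => /existsP [s Hs]; rewrite /plow; case: pickP => [y Hy|H] //.
by rewrite H in Hs.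
Qed.

Lemma K_decomp s : s \in K -> [\/ s \in crit W, s \in upreg W | s \in lowreg W].
Proof.
move=> Hs; have := idx_at HW Hs; have := mem_nth (x0 V) (idx_lt HW Hs).
case: (nth (x0 V) W (idx W s)) => [nu|[sg tu]] Hy; rewrite !inE.
  by move=> /eqP ->; apply: Or31.
case/orP => /eqP ->.
  by apply: Or33; apply/existsP; exists tu.
by apply: Or32; apply/existsP; exists sg.
Qed.

Lemma crit_sub : crit W \subset K.
Proof. apply/subsetP => s; rewrite inE => Hs; apply: (subsetP (added_sub HW Hs)); by rewrite inE. Qed.

Lemma low_sub : lowreg W \subset K.
Proof. by apply/subsetP => s Hs; have [] := pair_K HW (pupP Hs). Qed.

Lemma up_sub : upreg W \subset K.
Proof. by apply/subsetP => s Hs; have [] := pair_K HW (plowP Hs). Qed.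

End Final.

Unset Implicit Arguments.


Theorem proposition18 (V : finType) (K : {set {set V}}) (W : seq (step V))
  (rf crf : {set V} -> {set {set V}}) :
  morse_seq K W -> is_ref K W rf -> is_coref K W crf ->
  forall p : nat,
    (forall z, is_cycle K p z ->
       is_boundary K p (csum (ext K crf (lin rf z)) z)) /\
    (forall z, is_cocycle K p z ->
       is_coboundary K p (csum (coext K rf (lin crf z)) z)).
Proof.
move=> HW [Hr1 Hr2 Hr3] [Hc1 Hc2 Hc3] p.
have HDD1 := bdbd (K_closed HW).
have HDD2 := cobdcobd (K_closed HW).
have HrC : forall s, s \in K -> rf s \subset crit W.
  move=> s Hs; apply: subset_trans (Hr1 s Hs) _; apply/subsetP => x; rewrite inE.
  by case/andP.
have HcC : forall s, s \in K -> crf s \subset crit W.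
  move=> s Hs; apply: subset_trans (Hc1 s Hs) _; apply/subsetP => x; rewrite inE.
  by case/andP.
have HbdK : forall t, bd K t \subset K.
  by move=> t; apply/subsetP => x; rewrite inE => /andP [].
have HcbdK : forall t, cobd K t \subset K.
  by move=> t; apply/subsetP => x; rewrite inE => /andP [].
split.
- move=> z [HzK Hcyc].
  have Hz1 : z \subset K.
    by apply: subset_trans HzK _; apply/subsetP => x; rewrite inE => /andP [].
  have Hz2 : {in z, forall s : {set V}, #|s| = p.+1}.
    by move=> s /(subsetP HzK); rewrite inE => /andP [_ /eqP].
  have := @main_gen V K (crit W) (lowreg W) (upreg W) (bd K) rf crf (cobd K)
    (fun s => #|s|) predn succn (idx W) (pup W) (plow W).
  case/(_ _ _ _ _ _ _ _ _ _ _ _ _ _ _ p.+1 z Hz1 Hz2 Hcyc).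
  + by move=> s /(K_decomp HW).
  + exact: Hr2.
  + exact: Hr3.
  + exact: HbdK.
  + by move=> t x; rewrite inE => /and3P [_ _ /eqP <-].
  + move=> s Hs; have Hp := pupP Hs.
    have [HsK HtK] := pair_K HW Hp.
    have [Hi1 Hi2] := idx_pair HW Hp.
    split.
    * by rewrite inE; apply/existsP; exists s.
    * by rewrite inE HsK (pair_proper HW Hp) (pair_card HW Hp) /=.
    * exact: (pair_card HW Hp).
    * move=> x; rewrite inE => /and3P [HxK Hxp _] Hxs.
      by rewrite Hi1; apply: (pair_below HW Hp).
  + move=> l Hl; have Hp := plowP Hl.
    have [HsK HtK] := pair_K HW Hp.
    have [Hi1 Hi2] := idx_pair HW Hp.
    split.
    * by rewrite inE; apply/existsP; exists l.
    * by rewrite inE HsK (pair_proper HW Hp) (pair_card HW Hp) /=.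
    * move=> l' Hl' Hne; rewrite inE => /and3P [_ Hpr _].
      rewrite Hi2; apply: (pair_above HW Hp) => //.
      exact: (subsetP (up_sub HW)).
  + exact: HrC.
  + exact: crit_sub HW.
  + exact: up_sub HW.
  + exact: Hc2.
  + exact: Hc3.
  + move=> s Hs nu; rewrite !inE (subsetP (low_sub HW) s Hs) /=.
    by rewrite [#|nu| == _]eq_sym.
  + exact: HDD1.
  move=> w [HwL Hws Heq]; exists w; last by rewrite Heq.
  apply/subsetP => x Hx; rewrite inE (subsetP (up_sub HW)) ?(subsetP HwL) //=.
  by rewrite Hws.
- move=> z [HzK Hcyc].
  have Hz1 : z \subset K.
    by apply: subset_trans HzK _; apply/subsetP => x; rewrite inE => /andP [].
  have Hz2 : {in z, forall s : {set V}, #|s| = p.+1}.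
    by move=> s /(subsetP HzK); rewrite inE => /andP [_ /eqP].
  have := @main_gen V K (crit W) (upreg W) (lowreg W) (cobd K) crf rf (bd K)
    (fun s => #|s|) succn predn (fun s => size W - idx W s) (plow W) (pup W).
  case/(_ _ _ _ _ _ _ _ _ _ _ _ _ _ _ p.+1 z Hz1 Hz2 Hcyc).
  + by move=> s /(K_decomp HW) [] H; [apply: Or31 | apply: Or33 | apply: Or32].
  + exact: Hc2.
  + exact: Hc3.
  + exact: HcbdK.
  + by move=> t x; rewrite inE => /and3P [_ _ /eqP ->].
  + move=> t Ht; have Hp := plowP Ht.
    have [HsK HtK] := pair_K HW Hp.
    have [Hi1 Hi2] := idx_pair HW Hp.
    split.
    * by rewrite inE; apply/existsP; exists t.
    * by rewrite inE HtK (pair_proper HW Hp) (pair_card HW Hp) /=.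
    * by rewrite (pair_card HW Hp).
    * move=> x; rewrite inE => /and3P [HxK Hxp _] Hxs.
      have := pair_above HW Hp HxK Hxp Hxs; have := idx_lt HW HxK.
      rewrite Hi2; lia.
  + move=> l Hl; have Hp := pupP Hl.
    have [HsK HtK] := pair_K HW Hp.
    have [Hi1 Hi2] := idx_pair HW Hp.
    split.
    * by rewrite inE; apply/existsP; exists l.
    * by rewrite inE HtK (pair_proper HW Hp) (pair_card HW Hp) /=.
    * move=> l' Hl' Hne; rewrite inE => /and3P [_ Hpr _].
      have Hl'K := subsetP (low_sub HW) l' Hl'.
      have := pair_below HW Hp Hl'K Hpr Hne; have := idx_lt HW HsK.
      rewrite Hi1; lia.
  + exact: HcC.
  + exact: crit_sub HW.
  + exact: low_sub HW.
  + exact: Hr2.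
  + exact: Hr3.
  + move=> s Hs nu; rewrite !inE (subsetP (up_sub HW) s Hs) /=.
    by rewrite [#|s| == _]eq_sym.
  + exact: HDD2.
  move=> w [HwL Hws Heq]; exists w; last by rewrite Heq.
  apply/subsetP => x Hx; rewrite inE (subsetP (low_sub HW)) ?(subsetP HwL) //=.
  by rewrite Hws.
Qed.
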